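(* If $k$ is even, then every matching of $X_{2k}$ has at least one disjoint compatible matching; i.e. $\mathbf{DCM}_k$ has no isolated vertices.
   Context: Let $k\ge 1$ and let $X_{2k}=\{P_1,\dots,P_{2k}\}$ be $2k$ points in convex position in the plane, labeled in clockwise cyclic order. A matching of $X_{2k}$ means a set of $k$ pairwise non-crossing straight segments (edges) with endpoints in $X_{2k}$ covering every point exactly once; its size is $k$. Two matchings $M,M'$ of $X_{2k}$ are disjoint compatible if they have no common edge and no edge of $M$ crosses an edge of $M'$. $\mathbf{DCM}_k$ is the graph whose vertices are the matchings of $X_{2k}$, two being adjacent iff they are disjoint compatible. *)

(* Defs.v *)
From mathcomp Require Import all_boot.
Set Implicit Arguments. Unset Strict Implicit. Unset Printing Implicit Defensive.

(* The points P_1,...,P_{2k} in clockwise order are modelled by 'I_(2k)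
   (P_{i+1} <-> i).  An edge (straight segment) is a set of points;
   a matching is a set of edges. *)
Definition point (k : nat) := 'I_(2 * k).
Definition edge (k : nat) := {set point k}.
Definition matching_set (k : nat) := {set edge k}.

(* For points in convex position, the open segments P_aP_b and P_cP_d
   (a<b, c<d) cross iff their endpoints interleave along the cyclic
   order: a < c < b < d or c < a < d < b. *)
Definition cross_ord (k : nat) (e f : edge k) : bool :=
  [exists a : point k, exists b : point k, exists c : point k, exists d : point k,
     [&& e == [set a; b], f == [set c; d], a < c, c < b & b < d]].

Definition cross (k : nat) (e f : edge k) : bool := cross_ord e f || cross_ord f e.

Definition is_matching (k : nat) (M : matching_set k) : bool :=
  [&& [forall e in M, #|e| == 2],
      [forall x : point k, #|[set e in M | x \in e]| == 1]
    & [forall e in M, forall f in M, ~~ cross e f]].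

Definition disj_compat (k : nat) (M M' : matching_set k) : bool :=
  [disjoint M & M'] && [forall e in M, forall f in M', ~~ cross e f].

Definition DCM_adj (k : nat) (M M' : matching_set k) : bool :=
  [&& is_matching M, is_matching M' & disj_compat M M'].

(* Main.v *)
Require Import Defs.
From mathcomp Require Import all_boot zify.
Set Implicit Arguments. Unset Strict Implicit. Unset Printing Implicit Defensive.

Definition gm (k : nat) (S : {set point k}) (M : matching_set k) : Prop :=
  [/\ forall e, e \in M -> #|e| = 2,
      forall x, #|[set e in M | x \in e]| = (x \in S)
    & forall e f, e \in M -> f \in M -> ~~ cross e f].

Lemma mk_cross k (a b c d : point k) : a < c -> c < b -> b < d ->
  cross_ord [set a; b] [set c; d].
Proof.
move=> h1 h2 h3; apply/existsP; exists a; apply/existsP; exists b;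
apply/existsP; exists c; apply/existsP; exists d; by rewrite !eqxx h1 h2 h3.
Qed.

Lemma crossC k (e f : edge k) : cross e f = cross f e.
Proof. by rewrite /cross orbC. Qed.

Lemma cross_ord_btw k (e f : edge k) : cross_ord e f ->
  exists u v w, [/\ u \in e, v \in e, w \in f, u < w & w < v].
Proof.
case/existsP=> a /existsP[b /existsP[c /existsP[d /and5P[/eqP-> /eqP-> h1 h2 h3]]]].
exists a, b, c; by rewrite !inE !eqxx ?orbT.
Qed.

Lemma cross_ord_btw2 k (e f : edge k) : cross_ord f e ->
  exists u v w, [/\ u \in e, v \in e, w \in f, u < w & w < v].
Proof.
case/existsP=> a /existsP[b /existsP[c /existsP[d /and5P[/eqP-> /eqP-> h1 h2 h3]]]].
exists c, d, b; by rewrite !inE !eqxx ?orbT.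
Qed.

Lemma cross_btw k (e f : edge k) : cross e f ->
  exists u v w, [/\ u \in e, v \in e, w \in f, u < w & w < v].
Proof. by case/orP; [apply: cross_ord_btw | apply: cross_ord_btw2]. Qed.

Lemma nc_loc k (e f : edge k) (a d : nat) :
  (forall u, u \in e -> a <= u <= d) -> (forall w, w \in f -> ~~ (a <= w <= d)) ->
  ~~ cross e f.
Proof.
move=> he hf; apply/negP=> /cross_btw[u [v [w [ue ve wf uw wv]]]].
move: (he _ ue) (he _ ve) (hf _ wf) => /andP[h1 h2] /andP[h3 h4].
rewrite negb_and -!ltnNge => /orP[] h5; move: h1 h2 h3 h4 h5 uw wv; lia.
Qed.

Lemma nc_gap k (e f : edge k) (p q : nat) : p < q ->
  (forall u, u \in e -> u = p :> nat \/ u = q :> nat) ->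
  (forall w, w \in f -> ~~ ((p < w) && (w < q))) -> ~~ cross e f.
Proof.
move=> pq he hf; apply/negP=> /cross_btw[u [v [w [ue ve wf uw wv]]]].
move: (he _ ue) (he _ ve) (hf _ wf); rewrite negb_and -!leqNgt.
move=> h1 h2 /orP[] h3; move: h1 h2 h3 uw wv; case=> E1; case=> E2; rewrite ?E1 ?E2; lia.
Qed.

Section G.
Variables (k : nat) (S : {set point k}) (M : matching_set k).
Hypothesis hg : gm S M.

Lemma gm_mem e x : e \in M -> x \in e -> x \in S.
Proof.
case: hg=> _ hc _ eM xe; have := hc x.
have : e \in [set e in M | x \in e] by rewrite inE eM xe.
move=> h; case: (x \in S) => //= hh.
by move/card0_eq: hh => /(_ e); rewrite h.
Qed.

Lemma partner_ex x : x \in S -> exists y, x != y /\ [set x; y] \in M.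
Proof.
case: hg=> h2 hc _ xS; have /eqP := hc x; rewrite xS => /cards1P[e he].
have : e \in [set e in M | x \in e] by rewrite he inE.
rewrite inE => /andP[eM xe]; have /eqP/cards2P[u [v [uv ee]]] := h2 _ eM.
move: xe; rewrite ee !inE => /orP[]/eqP->.
  by exists v; rewrite -ee.
by exists u; rewrite setUC -ee eq_sym.
Qed.

Lemma partner_uniq x y z : [set x; y] \in M -> [set x; z] \in M -> y = z.
Proof.
case: hg=> h2 hc _ e1 e2.
have : #|[set e in M | x \in e]| <= 1 by rewrite hc; case: (x \in S).
move/card_le1_eqP=> h.
have e : [set x; y] = [set x; z] by apply: h; rewrite inE ?e1 ?e2 !inE eqxx.
have := h2 _ e1; rewrite cards2; case: eqP => // /eqP xy _.
have : y \in [set x; z] by rewrite -e !inE eqxx orbT.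
rewrite !inE eq_sym (negbTE xy) /=; by move/eqP.
Qed.

Lemma gm_nc e f : e \in M -> f \in M -> ~~ cross e f.
Proof. by case: hg=> _ _ h; apply: h. Qed.

Lemma nc_inside (a b x y : point k) : [set a; b] \in M -> a < b ->
  [set x; y] \in M -> a < x < b -> a < y < b.
Proof.
move=> ab lab xy /andP[ax xb].
have ya : y != a.
  apply/eqP=> E; subst y; move: xy; rewrite setUC=> xy.
  by have := partner_uniq ab xy => E; subst x; rewrite ltnn in xb.
have yb : y != b.
  apply/eqP=> E; subst y; move: xy ab; rewrite setUC=> xy; rewrite setUC=> ab.
  by have := partner_uniq ab xy => E; subst x; rewrite ltnn in ax.
have ya' : (y : nat) != a by [].
have yb' : (y : nat) != b by [].
case: (ltnP y a) => hya.
  have := gm_nc xy ab; rewrite /cross setUC (mk_cross hya ax xb) //.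
case: (ltnP b y) => hby.
  have := gm_nc ab xy; rewrite /cross (mk_cross ax xb hby) //.
apply/andP; split; move: ya' yb' hya hby; lia.
Qed.

End G.

Lemma eq_ord k (u x : point k) : (u : nat) = x -> u = x.
Proof. exact: ord_inj. Qed.

Lemma min_ex k (S : {set point k}) (lo hi : nat) :
  (exists x : point k, x \in S /\ lo <= x < hi) ->
  exists x : point k, [/\ x \in S, lo <= x, x < hi &
     forall u : point k, u \in S -> lo <= u < hi -> x <= u].
Proof.
move=> [x0 [x0S /andP[hx1 hx2]]].
pose P := fun m : nat => [exists u : point k, [&& u \in S, lo <= u, u < hi & (u : nat) == m]].
have exP : exists m, P m.
  exists (x0 : nat); apply/existsP; exists x0; by rewrite x0S hx1 hx2 eqxx.
case: (ex_minnP exP) => m /existsP[u /and4P[uS lou uhi /eqP um]] hmin.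
exists u; split=> // v vS /andP[lov vhi]; rewrite um; apply: hmin.
apply/existsP; exists v; by rewrite vS lov vhi eqxx.
Qed.

Definition block k (S : {set point k}) (M : matching_set k) :=
  exists a b c d : point k, [/\ a < b, b < c, c < d,
    (forall u, u \in S -> a <= u <= d -> [\/ u = a, u = b, u = c | u = d]) &
    ([set a; b] \in M /\ [set c; d] \in M \/ [set a; d] \in M /\ [set b; c] \in M)].

Lemma find_L k (S : {set point k}) (M : matching_set k) (hg : gm S M) n :
  forall lo hi : nat, hi - lo <= n ->
  (forall x y : point k, [set x; y] \in M -> lo <= x < hi -> lo <= y < hi) ->
  (exists x : point k, x \in S /\ lo <= x < hi) ->
  block S M \/ exists x y : point k, [/\ [set x; y] \in M, lo <= x, x < y, y < hi &
      forall u, u \in S -> lo <= u < hi -> u = x \/ u = y].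
Proof.
elim: n => [|n IH] lo hi hn hcl hne.
  by case: hne => x [_ /andP[h1 h2]]; move: hn h1 h2; lia.
have [x [xS lox xhi xmin]] := min_ex hne.
have [y [xy xyM]] := partner_ex hg xS.
have /andP[loy yhi] : lo <= y < hi by apply: (hcl x); rewrite ?lox.
have yS : y \in S by apply: (gm_mem hg xyM); rewrite !inE eqxx orbT.
have xy' : (x : nat) != y by [].
have xly : x < y by have := xmin y yS; rewrite loy yhi => /(_ isT); move: xy'; lia.
case: (boolP [exists u : point k, [&& u \in S, x < u & u < y]]) => [/existsP[u /and3P[uS xu uy]]|noint].
  have := IH x.+1 y _ _ _; case.
  - move: hn lox yhi; lia.
  - move=> p q pqM /andP[h1 h2]; have := nc_inside hg xyM xly pqM; rewrite h1 h2 => /(_ isT).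
    by move=> /andP[-> ->].
  - by exists u; rewrite uS xu uy.
  - by left.
  move=> [p [q [pqM xp pq qy cov]]]; left; exists x, p, q, y; split => //.
    move=> v vS /andP[xv vy].
    case: (ltngtP x v) => hxv; last by constructor 1; apply: eq_ord.
    - case: (ltngtP v y) => hvy; last by constructor 4; apply: eq_ord.
      + by case: (cov v vS); rewrite ?hxv ?hvy // => ->; [constructor 2|constructor 3].
      + by move: vy hvy; lia.
    - by move: xv hxv; lia.
  by right.
have hno : forall v, v \in S -> x < v -> v < y -> False.
  move=> v vS h1 h2; move/existsP: noint; apply; exists v; by rewrite vS h1 h2.
case: (boolP [exists u : point k, [&& u \in S, y < u & u < hi]]) => [/existsP[u /and3P[uS yu uhi]]|noint2].
  have := IH y.+1 hi _ _ _; case.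
  - move: hn lox; lia.
  - move=> p q pqM /andP[h1 h2].
    have /andP[loq qhi] : lo <= q < hi by apply: (hcl p _ pqM); rewrite h2 andbT; move: loy h1; lia.
    have qS : q \in S by apply: (gm_mem hg pqM); rewrite !inE eqxx orbT.
    have xq := xmin q qS (ltac:(by rewrite loq qhi)).
    rewrite qhi andbT.
    case: (ltngtP q y) => hqy //.
    + case: (ltngtP x q) => hxq.
      * by case: (hno q qS hxq hqy).
      * by move: xq hxq; lia.
      * have E := eq_ord hxq; subst q; move: pqM; rewrite setUC => pqM.
        have E := partner_uniq hg xyM pqM; subst p; by move: h1; lia.
    + have E := eq_ord hqy; subst q; move: pqM; rewrite setUC => pqM.
      move: xyM; rewrite setUC => xyM.
      have E := partner_uniq hg xyM pqM; subst p; by move: h1 xly; lia.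
  - by exists u; rewrite uS yu uhi.
  - by left.
  move=> [z [w [zwM yz zw whi cov]]]; left; exists x, y, z, w; split => //.
    move=> v vS /andP[xv vw].
    case: (ltngtP x v) => hxv; last by constructor 1; apply: eq_ord.
    - case: (ltngtP v y) => hvy; last by constructor 2; apply: eq_ord.
      + by case: (hno v vS hxv hvy).
      + by case: (cov v vS); rewrite ?hvy ?(leq_ltn_trans vw whi) // => ->; [constructor 3|constructor 4].
    - by move: xv hxv; lia.
  by left.
right; exists x, y; split => // v vS /andP[lov vhi].
have xv := xmin v vS (ltac:(by rewrite lov vhi)).
case: (ltngtP x v) => hxv; last by left; apply: eq_ord.
- case: (ltngtP v y) => hvy; last by right; apply: eq_ord.
  + by case: (hno v vS hxv hvy).
  + by move/existsP: noint2; case; exists v; rewrite vS hvy vhi.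
- by move: xv hxv; lia.
Qed.

Lemma card_sepU1 k (A : matching_set k) (e : edge k) (x : point k) : e \notin A ->
  #|[set f in e |: A | x \in f]| = (x \in e) + #|[set f in A | x \in f]|.
Proof.
move=> eA.
have -> : [set f in e |: A | x \in f] =
   if x \in e then e |: [set f in A | x \in f] else [set f in A | x \in f].
  apply/setP=> f; case: (eqVneq f e) => [->|fe]; case xe: (x \in e);
  by rewrite !inE ?eqxx ?xe ?(negbTE fe) ?andbF.
case xe: (x \in e) => //; by rewrite cardsU1 inE (negbTE eA) xe.
Qed.

Lemma disj_mem (T : finType) (A B : {set T}) : (forall x, x \in A -> x \in B -> False) ->
  [disjoint A & B].
Proof.
move=> h; rewrite -setI_eq0; apply/eqP/setP=> x; rewrite !inE.
by apply/negP=> /andP[h1 h2]; apply: (h x).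
Qed.

Lemma edge_pt k (S : {set point k}) (M : matching_set k) (hg : gm S M) e :
  e \in M -> exists p, p \in e.
Proof.
case: hg=> h2 _ _ eM; have : 0 < #|e| by rewrite h2.
by rewrite card_gt0 => /set0Pn.
Qed.

Lemma step k m (IH : forall (S : {set point k}) (M : matching_set k),
          #|S| = 4 * m -> gm S M -> exists M', gm S M' /\ disj_compat M M')
  (S : {set point k}) (M : matching_set k) (hg : gm S M) (a d : nat)
  (E1 E2 N1 N2 : edge k) :
  #|S| = 4 * m.+1 -> E1 \in M -> E2 \in M -> E1 != E2 ->
  (forall x, (x \in E1) + (x \in E2) = (x \in N1) + (x \in N2)) ->
  (forall x, x \in E1 -> x \in E2 -> False) ->
  (forall x, x \in S -> a <= x <= d -> (x \in E1) || (x \in E2)) ->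
  (forall x, (x \in E1) || (x \in E2) -> a <= x <= d) ->
  #|N1| = 2 -> #|N2| = 2 -> N1 != N2 ->
  N1 != E1 -> N1 != E2 -> N2 != E1 -> N2 != E2 ->
  (forall e f, [|| e == E1, e == E2, e == N1 | e == N2] ->
      [|| f == E1, f == E2, f == N1 | f == N2] -> ~~ cross e f) ->
  exists M', gm S M' /\ disj_compat M M'.
Proof.
move=> cS E1M E2M E12 cnt dis cov rng cN1 cN2 N12 N1E1 N1E2 N2E1 N2E2 hq.
have [h2 hc hnc] := hg.
pose S0 := S :\: (E1 :|: E2).
pose M0 := M :\ E1 :\ E2.
have memS x : (x \in E1) || (x \in E2) -> x \in S.
  by case/orP=> h; [apply: (gm_mem hg E1M)|apply: (gm_mem hg E2M)].
have F1 x : (x \in S : nat) = (x \in E1) + (x \in E2) + (x \in S0).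
  move: (memS x) (dis x); rewrite /S0 !inE.
  case: (x \in E1); case: (x \in E2); case: (x \in S) => //= h1 h3;
  first [done | by case: (h3 isT isT) | by have := h1 isT].
have E1n : E1 \notin E2 |: M0.
  apply/negP; rewrite !inE => /orP[/eqP E|/and3P[_ h _]]; last by rewrite eqxx in h.
  by rewrite E eqxx in E12.
have E2n : E2 \notin M0 by apply/negP; rewrite !inE => /and3P[h _ _]; rewrite eqxx in h.
have Mdec : M = E1 |: (E2 |: M0).
  by rewrite /M0 setD1K ?setD1K // !inE E2M andbT eq_sym.
have cntM x : #|[set e in M | x \in e]| = (x \in E1) + ((x \in E2) + #|[set e in M0 | x \in e]|).
  by rewrite {1}Mdec card_sepU1 // card_sepU1.
have M0M e : e \in M0 -> e \in M by rewrite !inE => /and3P[].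
have hg0 : gm S0 M0.
  split.
  - by move=> e /M0M; apply: h2.
  - move=> x; move: (cntM x); rewrite hc F1 addnA => /addnI.
    by move=> ->.
  - by move=> e f /M0M eM /M0M fM; apply: hnc.
have cS0 : #|S0| = 4 * m.
  have sub : E1 :|: E2 \subset S by apply/subsetP=> x; rewrite inE; apply: memS.
  rewrite /S0 cardsD (setIidPr sub) cardsU.
  have -> : E1 :&: E2 = set0.
    by apply/setP=> x; rewrite !inE; apply/negP=> /andP[]; apply: dis.
  by rewrite cards0 subn0 (h2 _ E1M) (h2 _ E2M) cS; lia.
have [M0' [hg0' /andP[dj0 nc0]]] := IH _ _ cS0 hg0.
have [h2' hc' hnc'] := hg0'.
have out0 x : x \in S0 -> ~~ (a <= x <= d).
  rewrite !inE negb_or => /andP[/andP[n1 n2] xS]; apply/negP=> hx.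
  by have := cov x xS hx; rewrite (negbTE n1) (negbTE n2).
have inN x : (x \in N1) || (x \in N2) -> (x \in E1) || (x \in E2).
  have := cnt x; case: (x \in N1); case: (x \in N2); case: (x \in E1); case: (x \in E2) => //.
have notS0 x : (x \in E1) || (x \in E2) -> x \in S0 = false.
  by move=> h; rewrite !inE h.
have N1n0 : N1 \notin M0'.
  apply/negP=> hN; have : 0 < #|N1| by rewrite cN1.
  rewrite card_gt0 => /set0Pn[p pN]; have := gm_mem hg0' hN pN.
  by rewrite notS0 // inN // pN.
have N2n0 : N2 \notin M0'.
  apply/negP=> hN; have : 0 < #|N2| by rewrite cN2.
  rewrite card_gt0 => /set0Pn[p pN]; have := gm_mem hg0' hN pN.
  by rewrite notS0 // inN // pN orbT.
have N1n : N1 \notin N2 |: M0' by rewrite !inE negb_or N12.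
pose M' := N1 |: (N2 |: M0').
have rngN e : (e == N1) || (e == N2) -> forall x, x \in e -> a <= x <= d.
  by case/orP=> /eqP-> x hx; apply: rng; apply: inN; rewrite hx ?orbT.
have rngE e : (e == E1) || (e == E2) -> forall x, x \in e -> a <= x <= d.
  by case/orP=> /eqP-> x hx; apply: rng; rewrite hx ?orbT.
have out0' e : e \in M0' -> forall x, x \in e -> ~~ (a <= x <= d).
  by move=> eM x xe; apply: out0; apply: (gm_mem hg0' eM xe).
have out0M e : e \in M0 -> forall x, x \in e -> ~~ (a <= x <= d).
  by move=> eM x xe; apply: out0; apply: (gm_mem hg0 eM xe).
exists M'; split; first split.
- move=> e; rewrite !inE => /orP[/eqP->//|/orP[/eqP->//|]]; apply: h2'.
- move=> x; rewrite /M' card_sepU1 // card_sepU1 // hc' addnA -cnt.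
  by rewrite F1.
- move=> e f; rewrite !inE => he hf.
  case/orP: he => [he|]; [|case/orP=> [he|he]].
  + case/orP: hf => [hf|]; [|case/orP=> [hf|hf]].
    * by apply: hq; rewrite ?he ?hf ?orbT.
    * by apply: hq; rewrite ?he ?hf ?orbT.
    * apply: (nc_loc (rngN _ _)) => //; [by rewrite he|by apply: out0'].
  + case/orP: hf => [hf|]; [|case/orP=> [hf|hf]].
    * by apply: hq; rewrite ?he ?hf ?orbT.
    * by apply: hq; rewrite ?he ?hf ?orbT.
    * apply: (nc_loc (rngN _ _)) => //; [by rewrite he orbT|by apply: out0'].
  + case/orP: hf => [hf|]; [|case/orP=> [hf|hf]].
    * rewrite crossC; apply: (nc_loc (rngN _ _)) => //; [by rewrite hf|by apply: out0'].
    * rewrite crossC; apply: (nc_loc (rngN _ _)) => //; [by rewrite hf orbT|by apply: out0'].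
    * by apply: hnc'.
- apply/andP; split.
  apply: disj_mem => e eM; rewrite !inE => /orP[/eqP E|/orP[/eqP E|eM0']].
  + subst e; have : N1 \in M0 by rewrite !inE N1E1 N1E2 eM.
    move=> hN; have : 0 < #|N1| by rewrite cN1.
    rewrite card_gt0 => /set0Pn[p pN]; have := gm_mem hg0 hN pN.
    by rewrite notS0 // inN // pN.
  + subst e; have : N2 \in M0 by rewrite !inE N2E1 N2E2 eM.
    move=> hN; have : 0 < #|N2| by rewrite cN2.
    rewrite card_gt0 => /set0Pn[p pN]; have := gm_mem hg0 hN pN.
    by rewrite notS0 // inN // pN orbT.
  + have [p pe] := edge_pt hg0' eM0'.
    case: (boolP ((e == E1) || (e == E2))) => hE.
      have := gm_mem hg0' eM0' pe; rewrite notS0 //.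
      by case/orP: hE => /eqP E; rewrite -E pe ?orbT.
    have eM0 : e \in M0 by rewrite !inE eM andbT; move: hE; rewrite negb_or => /andP[-> ->].
    by move: dj0 => /pred0P /(_ e); rewrite /= eM0 eM0'.
  + apply/forallP=> e; apply/implyP=> eM; apply/forallP=> f; apply/implyP.
  case: (boolP ((e == E1) || (e == E2))) => hE.
    -- rewrite !inE => /orP[hf|/orP[hf|hf]].
      ** by apply: hq; rewrite ?hf ?orbT //; case/orP: hE => ->; rewrite ?orbT.
      ** by apply: hq; rewrite ?hf ?orbT //; case/orP: hE => ->; rewrite ?orbT.
      ** apply: (nc_loc (rngE _ hE)); by apply: out0'.
    -- have eM0 : e \in M0 by rewrite !inE eM andbT; move: hE; rewrite negb_or => /andP[-> ->].
    rewrite !inE => /orP[hf|/orP[hf|hf]].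
      ** rewrite crossC; apply: (nc_loc (rngN f _)); [by rewrite hf|by apply: out0M].
      ** rewrite crossC; apply: (nc_loc (rngN f _)); [by rewrite hf orbT|by apply: out0M].
      ** by move/forallP: nc0 => /(_ e); rewrite eM0 /= => /forallP /(_ f); rewrite hf.
Qed.

Ltac ng p q lab lbc lcd :=
  apply: (@nc_gap _ _ _ p q);
  [ by move: lab lbc lcd; lia
  | by move=> ?; rewrite !inE => /orP[]/eqP->; [left|right]
  | by move=> ?; rewrite !inE => /orP[]/eqP->; apply/negP => /andP[? ?]; move: lab lbc lcd; lia ].

Lemma quad_nc k (a b c d : point k) : a < b -> b < c -> c < d ->
  forall e f : edge k,
  [|| e == [set a; b], e == [set c; d], e == [set a; d] | e == [set b; c]] ->
  [|| f == [set a; b], f == [set c; d], f == [set a; d] | f == [set b; c]] ->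
  ~~ cross e f.
Proof.
move=> lab lbc lcd e f /or4P[]/eqP-> /or4P[]/eqP->;
first [ ng a b lab lbc lcd | ng c d lab lbc lcd | ng b c lab lbc lcd
      | rewrite crossC; first [ng a b lab lbc lcd | ng c d lab lbc lcd | ng b c lab lbc lcd]
      | ng a d lab lbc lcd ].
Qed.

Ltac memt nab nac nad nbc nbd ncd :=
  let x := fresh "x" in
  move=> x; rewrite !inE;
  case: (eqVneq x _) => [->|?]; rewrite ?eqxx ?nab ?nac ?nad ?nbc ?nbd ?ncd
    ?(eq_sym _ _) //=.

Lemma ltn_eqF' k (a b : point k) : a < b -> (a == b) = false.
Proof. by move=> h; apply/eqP=> E; move: h; rewrite E ltnn. Qed.

Lemma neq_set (T : finType) (A B : {set T}) (w : T) : w \in A -> w \notin B -> A != B.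
Proof. by move=> h1 h2; apply/negP=> /eqP E; rewrite E in h1; rewrite h1 in h2. Qed.

Ltac pts a b c d neqs :=
  let x := fresh "x" in
  move=> x; rewrite ?inE;
  case: (eqVneq x a) => [?|?]; [subst x; rewrite ?eqxx ?neqs /=; done|];
  case: (eqVneq x b) => [?|?]; [subst x; rewrite ?eqxx ?neqs /=; done|];
  case: (eqVneq x c) => [?|?]; [subst x; rewrite ?eqxx ?neqs /=; done|];
  case: (eqVneq x d) => [?|?]; [subst x; rewrite ?eqxx ?neqs /=; done|];
  done.

Lemma main_gen k m : forall (S : {set point k}) (M : matching_set k),
  #|S| = 4 * m -> gm S M -> exists M', gm S M' /\ disj_compat M M'.
Proof.
elim: m => [|m IH] S M cS hg.
  have S0 : S = set0 by apply: cards0_eq; rewrite cS.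
  exists set0; split; first split.
  - by move=> e; rewrite inE.
  - move=> x; rewrite S0 inE; apply/eqP; rewrite cards_eq0; apply/eqP/setP=> e; by rewrite !inE.
  - by move=> e f; rewrite inE.
  apply/andP; split; first by apply: disj_mem => e _; rewrite inE.
  apply/forallP=> e; apply/implyP=> _; apply/forallP=> f; by rewrite inE.
have [x0 x0S] : exists x, x \in S by apply/set0Pn; rewrite -card_gt0 cS.
case: (find_L hg (n := 2 * k) (lo := 0) (hi := 2 * k) _ _ _).
- by rewrite subn0.
- by move=> x y _ _; rewrite leq0n ltn_ord.
- by exists x0; rewrite x0S leq0n ltn_ord.
- move=> [a [b [c [d [lab lbc lcd cov hM]]]]].
  have lac := ltn_trans lab lbc; have lbd := ltn_trans lbc lcd; have lad := ltn_trans lac lcd.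
  have nab := ltn_eqF' lab; have nac := ltn_eqF' lac; have nad := ltn_eqF' lad.
  have nbc := ltn_eqF' lbc; have nbd := ltn_eqF' lbd; have ncd := ltn_eqF' lcd.
  have nba : (b == a) = false by rewrite eq_sym.
  have nca : (c == a) = false by rewrite eq_sym.
  have nda : (d == a) = false by rewrite eq_sym.
  have ncb : (c == b) = false by rewrite eq_sym.
  have ndb : (d == b) = false by rewrite eq_sym.
  have ndc : (d == c) = false by rewrite eq_sym.
  have rng4 x : [\/ x = a, x = b, x = c | x = d] -> a <= x <= d.
    case=> ->; apply/andP; split; by [ apply: leqnn | apply: ltnW ].
  have cov' x : x \in S -> a <= x <= d -> [|| x == a, x == b, x == c | x == d].
    by move=> xS hx; case: (cov x xS hx) => ->; rewrite eqxx ?orbT.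
  have neqs := (nab, nac, nad, nbc, nbd, ncd, nba, nca, nda, ncb, ndb, ndc).
  have sq : forall e f : edge k,
    [|| e == [set a; b], e == [set c; d], e == [set a; d] | e == [set b; c]] ->
    [|| f == [set a; b], f == [set c; d], f == [set a; d] | f == [set b; c]] ->
    ~~ cross e f by apply: quad_nc.
  have rng' : forall x, [|| x == a, x == b, x == c | x == d] -> a <= x <= d.
    by move=> x /or4P[]/eqP->; apply: rng4; [constructor 1|constructor 2|constructor 3|constructor 4].
  case: hM => [[abM cdM]|[adM bcM]].
  + apply: (step IH hg (a := a) (d := d) (E1 := [set a; b]) (E2 := [set c; d])
        (N1 := [set a; d]) (N2 := [set b; c])) => //.
    all: try (first [ by apply: (neq_set (w := a)); rewrite !inE ?eqxx ?neqs
                    | by apply: (neq_set (w := b)); rewrite !inE ?eqxx ?neqs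
                    | by apply: (neq_set (w := c)); rewrite !inE ?eqxx ?neqs
                    | by apply: (neq_set (w := d)); rewrite !inE ?eqxx ?neqs ]).
    all: try by rewrite cards2 ?neqs.
    * by pts a b c d neqs.
    * by pts a b c d neqs.
    * by move=> x xS hx; have := cov' x xS hx; rewrite !inE -!orbA.
    * by move=> x hx; apply: rng'; move: hx; rewrite !inE -!orbA; case/or4P=> ->; rewrite ?orbT.
  + apply: (step IH hg (a := a) (d := d) (E1 := [set a; d]) (E2 := [set b; c])
        (N1 := [set a; b]) (N2 := [set c; d])) => //.
    all: try (first [ by apply: (neq_set (w := a)); rewrite !inE ?eqxx ?neqs
                    | by apply: (neq_set (w := b)); rewrite !inE ?eqxx ?neqs
                    | by apply: (neq_set (w := c)); rewrite !inE ?eqxx ?neqs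
                    | by apply: (neq_set (w := d)); rewrite !inE ?eqxx ?neqs ]).
    all: try by rewrite cards2 ?neqs.
    * by pts a b c d neqs.
    * by pts a b c d neqs.
    * move=> x xS hx; have := cov' x xS hx; rewrite !inE.
      by case/or4P=> ->; rewrite ?orbT.
    * by move=> x hx; apply: rng'; move: hx; rewrite !inE; case/orP=> /orP[] ->; rewrite ?orbT.
    * move=> e f he hf; apply: sq; [move: he|move: hf];
      by case/or4P=> /eqP->; rewrite !eqxx ?orbT.
- move=> [x [y [_ _ _ _ cv]]].
  have sub : S \subset [set x; y].
    apply/subsetP=> u uS; rewrite !inE.
    have hu : 0 <= u < 2 * k by rewrite leq0n ltn_ord.
    by case: (cv u uS hu) => ->; rewrite eqxx ?orbT.
  have := subset_leq_card sub; rewrite cS cards2 mulnS; by case: (x != y).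
Qed.

Theorem mainTheorem10 (k : nat) (hk : 1 <= k) (hev : ~~ odd k)
  (M : matching_set k) (hM : is_matching M) :
  exists M' : matching_set k, DCM_adj M M'.
Proof.
have hg : gm [set: point k] M.
  case/and3P: hM => /forallP h1 /forallP h2 /forallP h3; split.
  - by move=> e eM; apply/eqP; move/implyP: (h1 e); apply.
  - by move=> x; rewrite inE; apply/eqP.
  - by move=> e f eM fM; move/implyP: (h3 e) => /(_ eM) /forallP /(_ f) /implyP; apply.
have cS : #|[set: point k]| = 4 * k./2.
  have ek : k = (k./2).*2 by rewrite -[LHS]odd_double_half (negbTE hev).
  rewrite cardsT card_ord {1}ek -muln2 [_ * 2]mulnC mulnA.
  by [].
have [M' [[g1 g2 g3] dc]] := main_gen cS hg.
exists M'; rewrite /DCM_adj hM dc /= andbT.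
apply/and3P; split.
- by apply/forallP=> e; apply/implyP=> eM; rewrite g1.
- by apply/forallP=> x; rewrite g2 inE.
- apply/forallP=> e; apply/implyP=> eM; apply/forallP=> f; apply/implyP=> fM; exact: g3.
Qed.
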